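(* Let $\mathcal{M}\subset\mathbb{R}^n$ be a locally symmetric $C^2$ submanifold, $\sigma\in\Sigma^n$ and $\bar x\in\mathcal{M}\cap\Delta(\sigma)$. Then $\mathrm{Proj}_{\Delta(\sigma)^{\perp\perp}}(T_{\mathcal{M}}(\bar x))=T_{\mathcal{M}}(\bar x)\cap\Delta(\sigma)^{\perp\perp}$, and consequently $$T_{\mathcal{M}}(\bar x)=(T_{\mathcal{M}}(\bar x)\cap\Delta(\sigma)^{\perp\perp})\oplus(T_{\mathcal{M}}(\bar x)\cap\Delta(\sigma)^{\perp}),\qquad N_{\mathcal{M}}(\bar x)=(N_{\mathcal{M}}(\bar x)\cap\Delta(\sigma)^{\perp\perp})\oplus(N_{\mathcal{M}}(\bar x)\cap\Delta(\sigma)^{\perp}).$$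
   Context: $\Sigma^n$ permutations of $\mathbb{N}_n$ acting by $(\sigma x)_i=x_{\sigma^{-1}(i)}$; $P(\sigma)$ partition into orbits of $\sigma$; $P(x)$ partition by equal coordinates; $\Delta(\sigma)=\{x:P(x)=P(\sigma)\}$; $\Delta(\sigma)^{\perp\perp}=\{x:x_i=x_j$ whenever $i,j$ lie in the same set of $P(\sigma)\}$ and $\Delta(\sigma)^{\perp}=\{x:\sum_{j\in I}x_j=0$ for every $I\in P(\sigma)\}$ (its orthogonal complement). $\mathbb{R}^n_\ge=\{x:x_1\ge\cdots\ge x_n\}$; $B$ open ball. A set $S$ is locally symmetric if $S\cap\mathbb{R}^n_\ge\ne\emptyset$ and each $x\in S$ has $\delta>0$ with $\sigma(S\cap B(x,\delta))=S\cap B(x,\delta)$ for all $y\in S\cap B(x,\delta)$, all $\sigma$ with $\sigma y=y$; a locally symmetric $C^2$ submanifold is a connected $C^2$ submanifold without boundary that is locally symmetric. $T_{\mathcal{M}}(\bar x)$, $N_{\mathcal{M}}(\bar x)$ are the tangent and normal spaces. *)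

(* Defs.v *)
From HB Require Import structures.
From mathcomp Require Import all_boot all_order all_algebra all_fingroup.
From mathcomp Require Import all_classical all_reals all_analysis.
Set Implicit Arguments. Unset Strict Implicit. Unset Printing Implicit Defensive.
Import Order.TTheory GRing.Theory Num.Theory.
Import numFieldNormedType.Exports.
Local Open Scope classical_set_scope.
Local Open Scope ring_scope.

Section Defs.
Variables (R : realType) (n : nat).
Notation vec := 'rV[R]_n.

Definition dotv (x y : vec) : R := \sum_(i < n) x ord0 i * y ord0 i.

Definition permv (s : 'S_n) (x : vec) : vec := \row_i x ord0 ((s^-1)%g i).

(* i and j lie in the same set of the partition P(sigma) into orbits *)
Definition same_orbit (s : 'S_n) (i j : 'I_n) : bool := j \in porbit s i.

(* Delta(sigma) = {x : P(x) = P(sigma)} *)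
Definition Delta (s : 'S_n) : set vec :=
  [set x | forall i j, (x ord0 i == x ord0 j) = same_orbit s i j].

Definition Delta_pp (s : 'S_n) : set vec :=
  [set x | forall i j, same_orbit s i j -> x ord0 i = x ord0 j].

Definition Delta_p (s : 'S_n) : set vec :=
  [set x | forall i, \sum_(j | same_orbit s i j) x ord0 j = 0].

Definition orthc (A : set vec) : set vec :=
  [set w | forall v, A v -> dotv w v = 0].

Definition is_proj (L : set vec) (v w : vec) : Prop :=
  L w /\ forall u, L u -> dotv (v - w) u = 0.

Definition proj_set (L : set vec) (A : set vec) : set vec :=
  [set w | exists2 v, A v & is_proj L v w].

Definition direct_sum (V A B : set vec) : Prop :=
  (forall v, V v <-> exists a b, [/\ A a, B b & v = a + b]) /\
  (forall v, A v -> B v -> v = 0).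

Definition Rge_cone : set vec :=
  [set x | forall i j : 'I_n, (i <= j)%N -> x ord0 j <= x ord0 i].

Definition eball (x : vec) (d : R) : set vec :=
  [set y | dotv (y - x) (y - x) < d ^+ 2].

Definition locally_symmetric (S : set vec) : Prop :=
  (S `&` Rge_cone !=set0) /\
  forall x, S x -> exists2 d : R, 0 < d &
    forall y s, (S `&` eball x d) y -> permv s y = y ->
      permv s @` (S `&` eball x d) = S `&` eball x d.

Definition C2_on (k : nat) (U : set vec) (F : vec -> 'rV[R]_k) : Prop :=
  open U /\
  (forall x, U x -> differentiable F x) /\
  (forall v x, U x -> differentiable ('D_v F) x) /\
  (forall v w x, U x -> {for x, continuous ('D_w ('D_v F))}).

Definition local_defining_map (M : set vec) (x : vec) (k : nat)
    (U : set vec) (F : vec -> 'rV[R]_k) : Prop :=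
  [/\ U x, C2_on U F,
      (forall w, exists v, 'd F x v = w) &
      M `&` U = [set y | U y /\ F y = 0]].

Definition C2_submanifold (M : set vec) : Prop :=
  forall x, M x -> exists k (U : set vec) (F : vec -> 'rV[R]_k),
    local_defining_map M x U F.

Definition locally_symmetric_C2_submanifold (M : set vec) : Prop :=
  [/\ connected M, C2_submanifold M & locally_symmetric M].

Definition tangent_of (k : nat) (F : vec -> 'rV[R]_k) (x : vec) : set vec :=
  [set v | 'd F x v = 0].

End Defs.

(* Main.v *)
Require Import Defs.
From HB Require Import structures.
From mathcomp Require Import all_boot all_order all_algebra all_fingroup.
From mathcomp Require Import all_classical all_reals all_analysis.
Import Order.TTheory GRing.Theory Num.Theory.
Import numFieldNormedType.Exports.
Local Open Scope classical_set_scope.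
Local Open Scope ring_scope.
Set Implicit Arguments. Unset Strict Implicit. Unset Printing Implicit Defensive.
Section Alg.
Variables (R : realType) (n : nat) (s : 'S_n).
Notation vec := 'rV[R]_n.

Lemma porbit_eqS (i j : 'I_n) : j \in porbit s i -> porbit s j = porbit s i.
Proof. by move=> h; apply/eqP; rewrite eq_porbit_mem. Qed.

Definition cnt (i : 'I_n) : R := #|porbit s i|%:R.

Lemma cnt_gt0 i : 0 < cnt i.
Proof. by rewrite /cnt ltr0n lt0n card_porbit_neq0. Qed.

Definition Pj (v : vec) : vec :=
  \row_i ((cnt i)^-1 * \sum_(j in porbit s i) v ord0 j).

Lemma dotvBl (a b u : vec) : dotv (a - b) u = dotv a u - dotv b u.
Proof. by rewrite /dotv -sumrB; apply: eq_bigr => i _; rewrite !mxE mulrBl. Qed.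

Lemma dotvDl (a b u : vec) : dotv (a + b) u = dotv a u + dotv b u.
Proof. by rewrite /dotv -big_split; apply: eq_bigr => i _; rewrite !mxE mulrDl. Qed.

Lemma dotvC (a b : vec) : dotv a b = dotv b a.
Proof. by apply: eq_bigr => i _; rewrite mulrC. Qed.

Lemma dotv_self0 (z : vec) : dotv z z = 0 -> z = 0.
Proof.
move=> h; apply/rowP => i; rewrite mxE.
have /psumr_eq0P H : \sum_(j < n) z ord0 j * z ord0 j = 0 by [].
have := H (fun j _ => (sqr_ge0 (z ord0 j))) i isT.
by move/eqP; rewrite mulf_eq0 orbb => /eqP.
Qed.

Lemma Pj_pp v : Delta_pp s (Pj v).
Proof.
move=> i j /= hij; rewrite !mxE /cnt; rewrite /same_orbit in hij.
by rewrite (porbit_eqS hij).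
Qed.

Lemma Pj_id u : Delta_pp s u -> Pj u = u.
Proof.
move=> hu; apply/rowP => i; rewrite mxE.
rewrite (eq_bigr (fun _ => u ord0 i)); last first.
  by move=> j hj; rewrite (hu i j).
rewrite sumr_const -mulr_natl -/(cnt i) mulrA mulVf ?mul1r//.
by have := cnt_gt0 i; rewrite /cnt lt0r => /andP[].
Qed.

Lemma Pj_sym w u : dotv (Pj w) u = dotv w (Pj u).
Proof.
rewrite /dotv.
transitivity (\sum_(i < n) \sum_(j < n)
   (if j \in porbit s i then (cnt i)^-1 * (w ord0 j * u ord0 i) else 0)).
  apply: eq_bigr => i _; rewrite mxE -mulrA mulr_suml big_mkcond /=.
  rewrite mulr_sumr; apply: eq_bigr => j _; by case: ifP => _; rewrite ?mulr0.
rewrite exchange_big /=; apply: eq_bigr => j _; rewrite mxE.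
rewrite mulrA mulr_sumr [RHS]big_mkcond /=; apply: eq_bigr => i _.
rewrite porbit_sym; case: ifP => h //.
by rewrite /cnt (porbit_eqS h) mulrCA mulrA [w _ _ * _]mulrC.
Qed.

Lemma Pj_orth v u : Delta_pp s u -> dotv (v - Pj v) u = 0.
Proof. by move=> hu; rewrite dotvBl Pj_sym Pj_id // subrr. Qed.

Lemma Pj_p v : Delta_p s (v - Pj v).
Proof.
move=> i; rewrite /same_orbit.
rewrite (eq_bigr (fun j => v ord0 j - Pj v ord0 i)); last first.
  by move=> j hj; rewrite !mxE /cnt (porbit_eqS hj).
rewrite sumrB sumr_const mxE -mulr_natl -/(cnt i) mulrA mulfV ?mul1r ?subrr //.
by have := cnt_gt0 i; rewrite lt0r => /andP[].
Qed.

Lemma pp_p0 (v : vec) : Delta_pp s v -> Delta_p s v -> v = 0.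
Proof.
move=> h1 h2; apply/rowP => i; rewrite mxE.
have := h2 i; rewrite /same_orbit.
rewrite (eq_bigr (fun _ => v ord0 i)); last by move=> j hj; rewrite (h1 i j).
rewrite sumr_const -mulr_natl -/(cnt i) => /eqP; rewrite mulf_eq0 => /orP[|/eqP//].
by have := cnt_gt0 i; rewrite lt0r => /andP[/negPf ->].
Qed.

Lemma pp_sub (a b : vec) : Delta_pp s a -> Delta_pp s b -> Delta_pp s (a - b).
Proof. by move=> ha hb i j h; rewrite !mxE (ha i j h) (hb i j h). Qed.

Lemma direct_sum_P (V : set vec) :
  (forall a b, V a -> V b -> V (a + b)) ->
  (forall a b, V a -> V b -> V (a - b)) ->
  (forall a, V a -> V (Pj a)) ->
  direct_sum V (V `&` Delta_pp s) (V `&` Delta_p s).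
Proof.
move=> hD hB hP; split; last by move=> v [_ h1] [_ h2]; exact: pp_p0.
move=> v; split.
  move=> Vv; exists (Pj v), (v - Pj v); split.
  - by split; [exact: hP | exact: Pj_pp].
  - by split; [apply: hB => //; exact: hP | exact: Pj_p].
  - by rewrite addrC subrK.
by case=> a [b [[Va _] [Vb _] ->]]; exact: hD.
Qed.

Lemma proj_set_P (T : set vec) :
  (forall a, T a -> T (Pj a)) ->
  proj_set (Delta_pp s) T = T `&` Delta_pp s.
Proof.
move=> hP; apply/seteqP; split.
  move=> w [v Tv [ppw orth]].
  have ew : w = Pj v.
    suff : Pj v - w = 0 by move/eqP; rewrite subr_eq0 => /eqP.
    apply: dotv_self0.
    have hz : Delta_pp s (Pj v - w) by apply: pp_sub => //; exact: Pj_pp.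
    have e1 := Pj_orth v hz; have e2 := orth _ hz.
    have : dotv ((v - w) - (v - Pj v)) (Pj v - w) = 0 by rewrite dotvBl e1 e2 subrr.
    by rewrite opprB addrC addrA subrK.
  by rewrite ew; split; [exact: hP | exact: Pj_pp].
move=> w [Tw ppw]; exists w => //; split => // u _.
by rewrite subrr /dotv big1 // => i _; rewrite mxE mul0r.
Qed.

End Alg.
From mathcomp Require Import ring lra.
Section Cnt.
Variables (R : realType) (n : nat) (s : 'S_n).
Notation vec := 'rV[R]_n.

Lemma sum_traject (f : 'I_n -> R) c i :
  \sum_(j <- traject s i c) f j = \sum_(t < c) f ((s ^+ t)%g i).
Proof.
elim: c i => [|c IH] i; first by rewrite big_nil big_ord0.
rewrite trajectS big_cons big_ord_recl IH expg0 perm1; congr (_ + _).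
by apply: eq_bigr => t _; rewrite /= expgS permM.
Qed.

Lemma sum_orbit1 (f : 'I_n -> R) i :
  \sum_(t < #|porbit s i|) f ((s ^+ t)%g i) = \sum_(j in porbit s i) f j.
Proof.
rewrite -sum_traject -big_enum /=; apply: perm_big.
apply: uniq_perm; [exact: uniq_traject_porbit | exact: enum_uniq |].
by move=> j; rewrite mem_enum porbit_traject.
Qed.

Lemma perm_orbit_fix i a : (s ^+ (a * #|porbit s i|))%g i = i.
Proof.
rewrite mulnC (expgM s) permX; apply: iter_fix.
by rewrite permX iter_porbit.
Qed.

Lemma sum_orbit (f : 'I_n -> R) i q :
  \sum_(0 <= t < q * #|porbit s i|) f ((s ^+ t)%g i) =
  q%:R * \sum_(j in porbit s i) f j.
Proof.
elim: q => [|q IH]; first by rewrite mul0n big_geq // mul0r.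
rewrite mulSnr (big_cat_nat (n := q * #|porbit s i|)) ?leq_addr //= IH.
have e : forall a b (g : nat -> R),
    \sum_(a <= t < a + b) g t = \sum_(0 <= t < b) g (t + a)%N.
  by move=> a b g; rewrite -{1}[a]add0n big_addn addKn.
rewrite e (eq_big_nat _ _ (F2 := fun t => f ((s ^+ t)%g i))); last first.
  by move=> t _; rewrite addnC expgD permM perm_orbit_fix.
by rewrite big_mkord sum_orbit1 mulrSr mulrDl mul1r.
Qed.

Definition Mo := \prod_(i < n) #|porbit s i|.

Lemma Mo_gt0 : (0 < Mo)%N.
Proof. by rewrite prodn_gt0 // => i; rewrite lt0n card_porbit_neq0. Qed.

Lemma Pj_avg (v : vec) :
  Pj s v = (Mo%:R)^-1 *: \sum_(t < Mo) permv ((s ^+ t)^-1)%g v.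
Proof.
apply/rowP => i; rewrite !mxE summxE.
rewrite (eq_bigr (fun t : 'I_Mo => v ord0 ((s ^+ t)%g i))); last first.
  by move=> t _; rewrite !mxE invgK.
have hd : (#|porbit s i| %| Mo)%N by rewrite /Mo (bigD1 i) //= dvdn_mulr.
rewrite -(big_mkord xpredT (fun t => v ord0 ((s ^+ t)%g i))).
rewrite -{1 2}(divnK hd) sum_orbit /cnt.
have c0 : (#|porbit s i|%:R : R) != 0 by rewrite pnatr_eq0 card_porbit_neq0.
have q0 : ((Mo %/ #|porbit s i|)%:R : R) != 0.
  rewrite pnatr_eq0 -lt0n divn_gt0 ?lt0n ?card_porbit_neq0 //.
  by apply: dvdn_leq => //; exact: Mo_gt0.
rewrite natrM; field; by apply/andP.
Qed.

End Cnt.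
Section Ana.
Variables (R : realType).

Lemma rnorm_ge m (x : 'rV[R]_m) i : `|x ord0 i| <= `|x|.
Proof.
change (`|x ord0 i| <= mx_norm x); rewrite mx_normrE.
exact: (le_bigmax _ (fun ij : 'I_1 * 'I_m => `|x ij.1 ij.2|) (ord0, i)).
Qed.

Lemma rnorm_le m (x : 'rV[R]_m) c : 0 <= c -> (forall i, `|x ord0 i| <= c) -> `|x| <= c.
Proof.
move=> c0 h; change (mx_norm x <= c); rewrite mx_normrE.
apply/bigmax_leP; split => // -[a b] _ /=.
by rewrite (ord1 a); exact: h.
Qed.

Variables (n k : nat).
Notation V := 'rV[R]_n.
Notation W := 'rV[R]_k.

Lemma line_is_derive (f : V -> W) (q d : V) (t0 : R) (j : 'I_k) :
  derivable f (q + t0 *: d) d ->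
  is_derive t0 1 (fun t : R => f (q + t *: d) ord0 j) ('D_d f (q + t0 *: d) ord0 j).
Proof.
move=> df; set a := q + t0 *: d.
set Q := (fun h : R => h^-1 *: ((f \o shift a) (h *: d) - f a)).
have eq : (fun h : R => h^-1 *: (((fun t => f (q + t *: d) ord0 j) \o shift t0) (h *: 1)
    - f (q + t0 *: d) ord0 j)) = (fun X : W => X ord0 j) \o Q.
  apply/funext => h /=; rewrite /Q /a /= !mxE [h *: 1]mulr1 scalerDl addrCA.
  by [].
have cv : ((fun X : W => X ord0 j) \o Q) x @[x --> 0^'] --> ('D_d f a) ord0 j.
  exact: (continuous_cvg _ (@coord_continuous R 1 k ord0 j _) df).
apply: DeriveDef; first by rewrite /derivable eq; apply/cvg_ex; eexists; exact: cv.
by rewrite /derive eq; exact: cvg_lim.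
Qed.


Lemma lin_basis (L : {linear V -> W}) (D : V) :
  L D = \sum_(i < n) D 0 i *: L 'e_i.
Proof.
by rewrite {1}(row_sum_delta D) linear_sum; apply: eq_bigr => i _; rewrite linearZ.
Qed.

Lemma lin_diff (A B : {linear V -> W}) (D : V) :
  A D - B D = \sum_(i < n) D 0 i *: (A 'e_i - B 'e_i).
Proof.
rewrite (lin_basis A) (lin_basis B) -sumrB.
by apply: eq_bigr => i _; rewrite scalerBr.
Qed.

Lemma convex_lt (h1 h2 : V) r t : `|h1| < r -> `|h2| < r -> 0 <= t -> t <= 1 ->
  `|h2 + t *: (h1 - h2)| < r.
Proof.
move=> a b t0 t1.
have -> : h2 + t *: (h1 - h2) = (1 - t) *: h2 + t *: h1.
  by rewrite scalerBr scalerBl scale1r [RHS]addrC addrCA.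
apply: le_lt_trans (ler_normD _ _) _.
rewrite !normrZ (ger0_norm t0) ger0_norm ?subr_ge0 //.
set m := Num.max `|h1| `|h2|.
have m1 : `|h1| <= m by rewrite le_max lexx.
have m2 : `|h2| <= m by rewrite le_max lexx orbT.
have mr : m < r by rewrite gt_max a b.
apply: le_lt_trans mr.
have : (1 - t) * `|h2| + t * `|h1| <= (1 - t) * m + t * m.
  by apply: lerD; apply: ler_wpM2l => //; rewrite subr_ge0.
by rewrite -mulrDl subrK mul1r.
Qed.

Lemma strict_diff (f : V -> W) (x : V) (U : set V) :
  open U -> U x -> (forall y, U y -> differentiable f y) ->
  (forall v, {for x, continuous (fun y => 'D_v f y)}) ->
  forall e, 0 < e -> exists2 d, 0 < d & forall h1 h2 : V, `|h1| < d -> `|h2| < d ->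
     `|f (x + h1) - f (x + h2) - 'd f x (h1 - h2)| <= e * `|h1 - h2|.
Proof.
move=> oU Ux df dc e e0.
set e' := e / (n%:R + 1).
have n1 : 0 < (n%:R + 1 : R) by rewrite ltr_wpDl.
have e'0 : 0 < e' by rewrite divr_gt0.
have ne : n%:R * e' <= e.
  rewrite /e' mulrA ler_pdivrMr // mulrDr mulr1 mulrC lerDl; exact: ltW.
have nb : \forall y \near x, U y /\
    forall i : 'I_n, `|'D_('e_i) f x - 'D_('e_i) f y| < e'.
  have h1 : \forall y \near x, U y by exact: open_nbhs_nbhs.
  have h2 : \forall y \near x, forall i : 'I_n,
      `|'D_('e_i) f x - 'D_('e_i) f y| < e'.
    apply: (@filter_forall _ _ (fun i y => `|'D_('e_i) f x - 'D_('e_i) f y| < e') (nbhs x) (nbhs_filter x)).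
    by move=> i; exact: ((cvgrPdist_lt _ _).1 (dc _) _ e'0).
  by near=> y; split; near: y.
have [r r0 hr] := (nbhs_ballP _ _).1 nb.
exists r => // h1 h2 nh1 nh2.
set D := h1 - h2; set q := x + h2.
have inB : forall t, 0 <= t -> t <= 1 -> U (q + t *: D) /\
    forall i : 'I_n, `|'D_('e_i) f x - 'D_('e_i) f (q + t *: D)| < e'.
  move=> t ta tb; apply: hr; rewrite -ball_normE /= /q opprD opprD !addrA subrr add0r.
  by rewrite -opprD normrN; exact: convex_lt.
set L := 'd f x.
have Lc : continuous L by exact: diff_continuous (df _ Ux).
have key : forall t, 0 <= t -> t <= 1 ->
    `|'D_D f (q + t *: D) - L D| <= e * `|D|.
  move=> t ta tb; have [Up hp] := inB t ta tb.
  set p := q + t *: D.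
  have eD := row_sum_delta D.
  have -> : 'D_D f p - L D =
      \sum_(i < n) D 0 i *: ('D_('e_i) f p - 'D_('e_i) f x).
    have dp := df _ Up; have dx := df _ Ux.
    rewrite deriveE // lin_diff.
    by apply: eq_bigr => i _; rewrite !deriveE.
  apply: le_trans (ler_norm_sum _ _ _) _.
  apply: (@le_trans _ _ (\sum_(i < n) (`|D| * e'))).
    apply: ler_sum => i _; rewrite normrZ; apply: ler_pM => //.
      exact: rnorm_ge.
    by rewrite distrC; apply: ltW.
  rewrite sumr_const card_ord -mulr_natl mulrCA mulrC.
  by apply: ler_wpM2r => //.
apply: rnorm_le; first by rewrite mulr_ge0 // ltW.
move=> j; clearbody L.
pose psi := fun t : R => f (q + t *: D) ord0 j - L (q + t *: D) ord0 j.
have dpsi : forall t : R, 0 <= t -> t <= 1 -> is_derive t 1 psi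
    ('D_D f (q + t *: D) ord0 j - 'D_D L (q + t *: D) ord0 j).
  move=> t ta tb; have [Up _] := inB t ta tb.
  have g1 := line_is_derive j (diff_derivable (v := D) (df _ Up)).
  have g2 := line_is_derive j (diff_derivable (v := D) (linear_differentiable (q + t *: D) Lc)).
  have h := is_deriveB g1 g2.
  exact: h.
have contpsi : {within `[0, 1], continuous psi}.
  apply: derivable_within_continuous => t; rewrite in_itv /= => /andP[ta tb].
  by have := dpsi t ta tb; case.
have hd : forall t : R, t \in `]0, 1[ -> is_derive t 1 psi
    ((fun t => 'D_D f (q + t *: D) ord0 j - 'D_D L (q + t *: D) ord0 j) t).
  by move=> t; rewrite in_itv /= => /andP[ta tb]; apply: dpsi; exact: ltW.
have [c cin eqc] := MVT ltr01 hd contpsi.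
move: cin; rewrite in_itv /= => /andP[ca cb].
have qD : q + D = x + h1 by rewrite /q /D -addrA (addrC h2) subrK.
have -> : (f (x + h1) - f q - L D) ord0 j = psi 1 - psi 0.
  rewrite /psi scale1r scale0r addr0 (linearD L q D) qD !mxE.
  move: (f (x + h1) ord0 j) (f q ord0 j) (L q ord0 j) (L D ord0 j) => a1 b1 c1 d1.
  ring.
rewrite eqc subr0 mulr1 /=.
have dL : differentiable L (q + c *: D) := linear_differentiable _ Lc.
have -> : 'D_D L (q + c *: D) = L D by rewrite (@deriveE _ _ _ L (q + c *: D) D dL) (diff_lin _ Lc).
have := rnorm_ge ('D_D f (q + c *: D) - L D) j; rewrite !mxE => /le_trans; apply.
by apply: key; apply: ltW.
Unshelve. all: end_near.
Qed.

End Ana.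
HB.instance Definition _ (R : realType) (m n : nat) :=
  Uniform_isComplete.Build 'M[R]_(m, n) (@mx_complete R m n).

Section Fix.
Variables (R : realType) (n k : nat).
Notation V := 'rV[R]_n.
Notation W := 'rV[R]_k.

Lemma fixed_point_ball (phi : W -> W) (rho : R) : 0 < rho ->
  (forall c, `|c| <= rho -> `|phi c| <= rho) ->
  (forall c1 c2, `|c1| <= rho -> `|c2| <= rho ->
     `|phi c1 - phi c2| <= 2^-1 * `|c1 - c2|) ->
  exists c, `|c| <= rho /\ phi c = c.
Proof.
move=> r0 hS hL.
pose B := closed_ball (0 : W) rho.
have BE : forall c, B c <-> `|c| <= rho.
  by move=> c; rewrite /B closed_ballE //= /closed_ball_ /= sub0r normrN.
have homo : {homo phi : c / B c >-> B c} by move=> c /BE /hS /BE.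
pose f : {fun B >-> B} := mkfun homo.
have ctr : is_contraction f.
  exists ((2:R)^-1)%:nng; split => /=; first by rewrite invf_lt1 // ltr1n.
  by move=> [c1 c2] [/= /BE h1 /BE h2]; exact: hL.
have B0 : B 0 by apply/BE; rewrite normr0 ltW.
have [c Bc fc] := banach_fixed_point ctr (@closed_ball_closed _ _ _ _)
   (ex_intro _ 0 B0).
by exists c; split; [exact/BE | rewrite [RHS]fc].
Qed.

Lemma norm_small0 (a : W) : (forall e : R, 0 < e -> `|a| <= e) -> a = 0.
Proof.
move=> h; apply/eqP; rewrite -normr_eq0; apply/negPn/negP => a0.
have ap : 0 < `|a| by rewrite lt0r a0 normr_ge0.
have := h (`|a| / 2) (divr_gt0 ap (ltr0Sn _ 1)).
move=> H; lra.
Qed.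

End Fix.
From mathcomp Require Import lra.
Lemma zmod_id (Z : zmodType) (a b c d : Z) : (a - b) - (c - d) = - ((b - d) - (a - c)).
Proof. by rewrite 3!opprB addrACA [RHS]addrACA (addrC (- c)). Qed.

Section Tan.
Variables (R : realType) (n k : nat).
Notation V := 'rV[R]_n.
Notation W := 'rV[R]_k.

Lemma tangent_inv (f : V -> W) (x : V) (U : set V) (G : V -> V) (r : R) :
  open U -> U x -> (forall y, U y -> differentiable f y) ->
  (forall v, {for x, continuous (fun y => 'D_v f y)}) ->
  (forall w, exists v, 'd f x v = w) -> f x = 0 ->
  (forall a b, G (a + b) = G a + G b) -> (forall (c : R) a, G (c *: a) = c *: G a) ->
  (forall h, `|G h| <= `|h|) -> 0 < r ->
  (forall h, `|h| < r -> f (x + h) = 0 -> f (x + G h) = 0) ->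
  forall v, 'd f x v = 0 -> 'd f x (G v) = 0.
Proof.
move=> oU Ux df dc surj fx0 GD GZ Gn r0 Gsym v.
have SD := strict_diff oU Ux df dc.
have Lc : continuous ('d f x) := diff_continuous (df _ Ux).
move: SD Lc surj; set L := 'd f x; clearbody L => SD Lc surj Lv.
have [KL KL0 hKL] := linear_lipschitz Lc.
pose a (j : 'I_k) := projT1 (cid (surj 'e_j)).
have ha j : L (a j) = 'e_j := projT2 (cid (surj 'e_j)).
pose A (c : W) : V := \sum_(j < k) c 0 j *: a j.
have LA c : L (A c) = c.
  rewrite linear_sum [RHS]row_sum_delta; apply: eq_bigr => j _.
  by rewrite linearZ ha.
have AB c1 c2 : A c1 - A c2 = A (c1 - c2).
  by rewrite /A -sumrB; apply: eq_bigr => j _; rewrite !mxE scalerBl.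
have A0 : A 0 = 0 by rewrite /A big1 // => j _; rewrite mxE scale0r.
pose KA := \sum_(j < k) `|a j| + 1.
have KA0 : 0 < KA by rewrite ltr_wpDl // sumr_ge0.
have hKA c : `|A c| <= KA * `|c|.
  apply: le_trans (ler_norm_sum _ _ _) _.
  apply: (@le_trans _ _ (\sum_(j < k) `|c| * `|a j|)).
    apply: ler_sum => j _; rewrite normrZ; apply: ler_wpM2r => //.
    exact: rnorm_ge.
  by rewrite -mulr_sumr mulrC ler_wpM2r // lerDl.
apply: norm_small0 => eta eta0.
pose C := KL * KA + 1.
have C0 : 0 < C by rewrite ltr_wpDl // mulr_ge0 // ltW.
pose eta1 := eta / C.
have eta10 : 0 < eta1 by rewrite divr_gt0.
have etaC : eta1 * C = eta by rewrite /eta1 divfK // gt_eqF.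
have v1 : 0 < `|v| + 1 by rewrite ltr_wpDl.
pose eps := Num.min (eta1 / (2 * (`|v| + 1))) (1 / (2 * KA)).
have eps0 : 0 < eps by rewrite lt_min !divr_gt0 // mulr_gt0.
have epsv : eps * `|v| <= eta1 / 2.
  have e1 : eps <= eta1 / (2 * (`|v| + 1)) by rewrite ge_min lexx.
  apply: le_trans (ler_wpM2r (normr_ge0 v) e1) _.
  set z := eta1 / (2 * (`|v| + 1)).
  have n2 : 2 * (`|v| + 1) != 0 by rewrite mulf_neq0 // (gt_eqF v1).
  have zE : eta1 = z * (2 * (`|v| + 1)) by rewrite /z divfK.
  have z0 : 0 <= z by rewrite /z ltW // divr_gt0 // mulr_gt0.
  rewrite zE; lra.
have epsA : eps * KA <= 1 / 2.
  have e1 : eps <= 1 / (2 * KA) by rewrite ge_min lexx orbT.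
  apply: le_trans (ler_wpM2r (ltW KA0) e1) _.
  set z := 1 / (2 * KA).
  have n2 : 2 * KA != 0 by rewrite mulf_neq0 // (gt_eqF KA0).
  have zE : 1 = z * (2 * KA) by rewrite /z divfK.
  lra.
have [d d0 hd] := SD eps eps0.
pose del := Num.min d r.
have del0 : 0 < del by rewrite lt_min d0 r0.
have deld : del <= d by rewrite ge_min lexx.
have delr : del <= r by rewrite ge_min lexx orbT.
pose Y := `|v| + KA * eta1 + 1.
have Y0 : 0 < Y by rewrite ltr_wpDl // addr_ge0 // mulr_ge0 // ltW.
pose t := del / (2 * Y).
have t0 : 0 < t by rewrite divr_gt0 // mulr_gt0.
have tdel : t * (`|v| + KA * eta1) < del.
  have n2 : 2 * Y != 0 by rewrite mulf_neq0 // (gt_eqF Y0).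
  have -> : del = t * (2 * Y) by rewrite /t divfK.
  rewrite ltr_pM2l // /Y; have := ltW Y0; rewrite /Y => HY; lra.
pose rho := eta1 * t.
have rho0 : 0 < rho by rewrite mulr_gt0.
have hsmall c : `|c| <= rho -> `|t *: v + A c| <= t * `|v| + KA * rho.
  move=> hc; apply: le_trans (ler_normD _ _) _.
  rewrite normrZ gtr0_norm //; apply: lerD => //.
  by apply: le_trans (hKA c) _; rewrite ler_wpM2l // ltW.
have hsmall2 c : `|c| <= rho -> `|t *: v + A c| < del.
  move=> hc; apply: le_lt_trans (hsmall c hc) _.
  by move: tdel; rewrite /rho; lra.
have hd' h1 h2 : `|h1| < del -> `|h2| < del ->
    `|f (x + h1) - f (x + h2) - L (h1 - h2)| <= eps * `|h1 - h2|.
  by move=> a1 a2; apply: hd; apply: lt_le_trans deld.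
have tv : `|t *: v| < del.
  by have := hsmall2 0; rewrite A0 addr0 normr0 => ->//; exact: ltW.
have fv : `|f (x + t *: v)| <= eps * (t * `|v|).
  have := hd' (t *: v) 0 tv; rewrite normr0 => /(_ del0).
  by rewrite addr0 fx0 !subr0 linearZZ Lv scaler0 subr0 normrZ gtr0_norm.
pose phi c := c - f (x + (t *: v + A c)).
have hL c1 c2 : `|c1| <= rho -> `|c2| <= rho ->
    `|phi c1 - phi c2| <= 2^-1 * `|c1 - c2|.
  move=> h1 h2.
  have e : c1 - c2 = L ((t *: v + A c1) - (t *: v + A c2)).
    by rewrite opprD addrACA subrr add0r AB LA.
  rewrite /phi zmod_id normrN [X in _ - X]e.
  apply: le_trans (hd' _ _ (hsmall2 _ h1) (hsmall2 _ h2)) _.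
  rewrite opprD addrACA subrr add0r AB.
  apply: le_trans (ler_wpM2l (ltW eps0) (hKA _)) _.
  by rewrite mulrA; apply: ler_wpM2r => //; move: epsA; lra.
have hS c : `|c| <= rho -> `|phi c| <= rho.
  move=> hc.
  have r0' : `|(0 : W)| <= rho by rewrite normr0 ltW.
  have -> : phi c = (phi c - phi 0) + phi 0 by rewrite subrK.
  apply: le_trans (ler_normD _ _) _.
  have := hL c 0 hc r0'; rewrite subr0 => H1.
  have e0 : phi 0 = - f (x + t *: v) by rewrite /phi A0 addr0 sub0r.
  rewrite e0 in H1 *; rewrite normrN.
  have H2 : eps * (t * `|v|) <= eta1 / 2 * t.
    by move: (ler_wpM2r (ltW t0) epsv); lra.
  move: H1 H2 fv hc; rewrite /rho; lra.
have [c [hc fc]] := fixed_point_ball rho0 hS hL.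
set h := t *: v + A c.
have F0 : f (x + h) = 0.
  move: (congr1 (fun z => z - c) fc) => /=.
  rewrite /phi addrAC !(subrr c) add0r -/h => /eqP; rewrite oppr_eq0 => /eqP //.
have hdel : `|h| < del := hsmall2 c hc.
have FG : f (x + G h) = 0 by apply: Gsym => //; exact: lt_le_trans delr.
have Gdel : `|G h| < del := le_lt_trans (Gn h) hdel.
have H1 : `|L (G h)| <= eps * `|h|.
  have := hd' (G h) 0 Gdel; rewrite normr0 => /(_ del0).
  rewrite addr0 FG fx0 !subr0 sub0r normrN => /le_trans; apply.
  by rewrite ler_wpM2l // ltW.
have H2 : `|L (G (A c))| <= KL * (KA * rho).
  apply: (le_trans (hKL (G (A c)))); apply: ler_wpM2l; first exact: ltW.
  apply: le_trans (Gn _) _; apply: le_trans (hKA _) _.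
  by apply: ler_wpM2l; [exact: ltW | exact: hc].
have H3 : t * `|L (G v)| <= `|L (G h)| + `|L (G (A c))|.
  have -> : t * `|L (G v)| = `|L (G h) - L (G (A c))|.
    by rewrite /h GD GZ linearD linearZZ addrK normrZ gtr0_norm.
  exact: ler_normB.
have H4 := hsmall c hc.
have H5 : eps * `|h| <= eps * (t * `|v| + KA * rho) by rewrite ler_wpM2l // ltW.
have H6 : eps * (t * `|v|) <= eta1 / 2 * t by move: (ler_wpM2r (ltW t0) epsv); lra.
have H7 : eps * (KA * rho) <= 1 / 2 * rho by move: (ler_wpM2r (ltW rho0) epsA); lra.
have H8 : t * `|L (G v)| <= t * eta.
  rewrite -etaC /C; move: H1 H2 H3 H5 H6 H7; rewrite /rho; nra.
by rewrite -(ler_pM2l t0).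
Qed.
End Tan.
Section Perm.
Variables (R : realType) (n : nat).
Notation V := 'rV[R]_n.

Lemma permvD (g : 'S_n) (a b : V) : permv g (a + b) = permv g a + permv g b.
Proof. by apply/rowP => i; rewrite !mxE. Qed.

Lemma permvZ (g : 'S_n) (c : R) (a : V) : permv g (c *: a) = c *: permv g a.
Proof. by apply/rowP => i; rewrite !mxE. Qed.

Lemma permv_norm (g : 'S_n) (a : V) : `|permv g a| <= `|a|.
Proof. by apply: rnorm_le => // i; rewrite mxE; exact: rnorm_ge. Qed.

Lemma dotv_norm (h : V) : dotv h h <= n%:R * `|h| ^+ 2.
Proof.
rewrite /dotv; apply: (@le_trans _ _ (\sum_(i < n) `|h| ^+ 2)).
  apply: ler_sum => i _; rewrite -expr2 -real_normK ?num_real //.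
  by rewrite lerXn2r ?nnegrE // rnorm_ge.
by rewrite sumr_const card_ord mulr_natl.
Qed.

End Perm.
Unset Implicit Arguments.
Theorem proposition3p15 (R : realType) (n : nat) (M : set 'rV[R]_n)
  (s : 'S_n) (xbar : 'rV[R]_n) (k : nat) (U : set 'rV[R]_n)
  (F : 'rV[R]_n -> 'rV[R]_k) :
  locally_symmetric_C2_submanifold M ->
  M xbar -> Delta s xbar ->
  local_defining_map M xbar U F ->
  let T := tangent_of F xbar in
  let N := orthc T in
  [/\ proj_set (Delta_pp s) T = T `&` Delta_pp s,
      direct_sum T (T `&` Delta_pp s) (T `&` Delta_p s) &
      direct_sum N (N `&` Delta_pp s) (N `&` Delta_p s)].
Proof.
move=> [_ _ [_ hloc]] Mx Dx [Ux [oU [dF [dD _]]] surj MU] T N.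
have Fx0 : F xbar = 0.
  by have : (M `&` U) xbar by []; rewrite MU => -[].
have dc : forall v, {for xbar, continuous (fun y => 'D_v F y)}.
  by move=> v; apply: differentiable_continuous; exact: dD.
have [dsym dsym0 hsym] := hloc xbar Mx.
have [rU rU0 hrU] := (nbhs_ballP _ _).1 (open_nbhs_nbhs (conj oU Ux)).
have n1 : 0 < (n%:R + 1 : R) by rewrite ltr_wpDl.
pose r2 := dsym / (n%:R + 1).
have r20 : 0 < r2 by rewrite divr_gt0.
pose r := Num.min rU r2.
have r0 : 0 < r by rewrite lt_min rU0 r20.
have inv : forall g : 'S_n, permv g xbar = xbar ->
    forall v, T v -> T (permv g v).
  move=> g gx v Tv; rewrite /T /tangent_of /=.
  apply: (tangent_inv (U := U) (G := permv g) (r := r)) => //.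
  - by move=> a b; exact: permvD.
  - by move=> c a; exact: permvZ.
  - by move=> h; exact: permv_norm.
  move=> h hr Fh.
  have hU : `|h| < rU by apply: lt_le_trans hr _; rewrite ge_min lexx.
  have h2 : `|h| < r2 by apply: lt_le_trans hr _; rewrite ge_min lexx orbT.
  have ballU : forall z, `|z| < rU -> U (xbar + z).
    by move=> z hz; apply: hrU; rewrite -ball_normE /= opprD addrA subrr sub0r normrN.
  have Mh : M (xbar + h).
    have : [set y | U y /\ F y = 0] (xbar + h) by split => //; exact: ballU.
    by rewrite -MU => -[].
  have Ee : eball xbar dsym (xbar + h).
    rewrite /eball /= addrC addKr.
    apply: le_lt_trans (dotv_norm h) _.
    have nh := normr_ge0 h.
    have : (n%:R + 1) * `|h| < dsym.
      by move: h2; rewrite /r2 ltr_pdivlMr // mulrC.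
    have n0 : (0 : R) <= n%:R by [].
    move=> H.
    set a := (n%:R + 1) * `|h|.
    have a0 : 0 <= a by rewrite mulr_ge0 // ltW.
    have Ha : a ^+ 2 < dsym ^+ 2 by rewrite !expr2; exact: ltr_pM.
    apply: le_lt_trans Ha; rewrite /a exprMn.
    apply: ler_wpM2r; first exact: exprn_ge0.
    rewrite expr2; nra.
  have Ex : (M `&` eball xbar dsym) xbar.
    split => //; rewrite /eball /= subrr /dotv big1 => [|i _].
      exact: exprn_gt0.
    by rewrite mxE mul0r.
  have := hsym xbar g Ex gx.
  move=> /(congr1 (fun S => S (permv g (xbar + h)))).
  move=> E.
  have Mg : (M `&` eball xbar dsym) (permv g (xbar + h)).
    by rewrite -E; exists (xbar + h).
  have eg : permv g (xbar + h) = xbar + permv g h by rewrite permvD gx.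
  rewrite eg in Mg; case: Mg => Mg _.
  have : (M `&` U) (xbar + permv g h).
    by split => //; apply: ballU; exact: le_lt_trans (permv_norm g h) hU.
  by rewrite MU => -[].
have fixx : forall t : nat, permv ((s ^+ t)^-1)%g xbar = xbar.
  move=> t; apply/rowP => i; rewrite mxE invgK.
  have := Dx i ((s ^+ t)%g i); rewrite /same_orbit mem_porbit => /eqP //.
have TP : forall v, T v -> T (Pj s v).
  move=> v Tv; rewrite Pj_avg /T /tangent_of /= linearZZ linear_sum big1 ?scaler0 //.
  by move=> t _; have := inv _ (fixx t) v Tv.
have TD : forall a b, T a -> T b -> T (a + b).
  by move=> a b; rewrite /T /tangent_of /= linearD => -> ->; rewrite addr0.
have TB : forall a b, T a -> T b -> T (a - b).
  by move=> a b; rewrite /T /tangent_of /= linearB => -> ->; rewrite subr0.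
split.
- exact: proj_set_P.
- exact: direct_sum_P.
apply: direct_sum_P.
- by move=> a b Na Nb u Tu; rewrite dotvDl Na ?Nb ?addr0.
- by move=> a b Na Nb u Tu; rewrite dotvBl Na ?Nb ?subr0.
- by move=> a Na u Tu; rewrite Pj_sym; apply: Na; exact: TP.
Qed.
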